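(* Let $A\in\mathbb{R}^{d\times d}$, $B\in\mathbb{R}^{d\times d_u}$, and suppose the controllability matrix $\mathcal{G}=[B\ AB\ \cdots\ A^dB]$ has rank $s_c<d$. Let $T$ be an invertible matrix such that $$TAT^{-1}=\begin{bmatrix}A_1&X_{12}\\0&X_2\end{bmatrix},\qquad TB=\begin{bmatrix}B_1\\0\end{bmatrix},$$ with $A_1\in\mathbb{R}^{s_c\times s_c}$, $X_{12}\in\mathbb{R}^{s_c\times(d-s_c)}$, $X_2\in\mathbb{R}^{(d-s_c)\times(d-s_c)}$, and define the relevant disturbances matrix $\mathcal{RD}=[X_{12}^\top\ \ X_2^\top X_{12}^\top\ \cdots\ (X_2^\top)^{d-s_c}X_{12}^\top]$. If $\mathrm{rank}(\mathcal{RD})=s_e$, then $L=(A,B,I_d)$ is equivalent to a PC-LQ: there is an invertible matrix $S$ such that $$SAS^{-1}=\begin{bmatrix}A_1&A_{12}&0\\0&A_2&0\\0&A_{32}&A_3\end{bmatrix},\qquad SB=\begin{bmatrix}B_1\\0\\0\end{bmatrix},$$ with $A_1\in\mathbb{R}^{s_c\times s_c}$ and $A_2\in\mathbb{R}^{s_e\times s_e}$.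
   Context: Such a transformation $T$ always exists when $\mathrm{rank}(\mathcal G)=s_c$. The paper phrases the conclusion as ''$L$ is rotationally equivalent to'' the three-block (PC-LQ) form; equivalence here means a change of state coordinates $x\mapsto Sx$. *)

(* Defs.v *)
From mathcomp Require Import all_boot all_order all_algebra.
From mathcomp Require Import reals.
Set Implicit Arguments. Unset Strict Implicit. Unset Printing Implicit Defensive.
Import GRing.Theory Num.Theory.
Local Open Scope ring_scope.

Definition krylov (R : pzRingType) (m p n : nat) (M : 'M[R]_m) (N : 'M[R]_(m, p)) :
    'M[R]_(m, \sum_(k < n.+1) p) :=
  \mxrow_(k < n.+1) (M ^+ k *m N).

Definition ctrb_mx (R : pzRingType) (d du : nat) (A : 'M[R]_d) (B : 'M[R]_(d, du)) :=
  krylov d A B.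

Definition rd_mx (R : pzRingType) (sc e : nat) (X12 : 'M[R]_(sc, e)) (X2 : 'M[R]_e) :=
  krylov e X2^T X12^T.

(* Main.v *)
Require Import Defs.
From mathcomp Require Import all_boot all_order all_algebra.
From mathcomp Require Import reals.
Import GRing.Theory Num.Theory.
Local Open Scope ring_scope.

Lemma key (F : fieldType) (sc n : nat) (X12 : 'M[F]_(sc, n)) (X2 : 'M[F]_n) k :
  (X12 *m X2 ^+ k <= \sum_(i < n.+1) <<X12 *m X2 ^+ i>>)%MS.
Proof.
case: n X12 X2 => [|n] X12 X2.
  by rewrite [X12 *m _]thinmx0 sub0mx.
set cp := char_poly X2.
have cp0 : cp != 0 by rewrite monic_neq0 // char_poly_monic.
have hX : X2 ^+ k = horner_mx X2 ('X^k %% cp).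
  have -> : X2 ^+ k = horner_mx X2 ('X^k) by rewrite rmorphXn /= horner_mx_X.
  rewrite {1}(divp_eq 'X^k cp) rmorphD rmorphM /= Cayley_Hamilton mulr0 add0r //.
rewrite hX; set q := 'X^k %% cp.
have hs : (size q <= n.+1)%N.
  by rewrite -ltnS -(size_char_poly X2); apply: ltn_modpN0.
rewrite -[q]coefK poly_def rmorph_sum /= mulmx_sumr.
apply: summx_sub => i _; rewrite horner_mxZ -scalemxAr; apply: scalemx_sub.
rewrite rmorphXn /= horner_mx_X.
have hi : (i < n.+2)%N by apply: leq_trans (ltn_ord i) (leqW hs).
by apply: (sumsmx_sup (Ordinal hi)) => //; rewrite genmxE.
Qed.

Lemma trX (F : fieldType) n (M : 'M[F]_n) k : (M^T ^+ k)^T = M ^+ k.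
Proof.
elim: k => [|k IH]; first by rewrite !expr0 trmx1.
by rewrite exprS -mulmxE trmx_mul IH trmxK mulmxE -exprSr.
Qed.

Lemma rdE (F : fieldType) sc e (X12 : 'M[F]_(sc, e)) (X2 : 'M[F]_e) :
  ((rd_mx X12 X2)^T :=: \sum_(i < e.+1) <<X12 *m X2 ^+ i>>)%MS.
Proof.
rewrite /rd_mx /krylov tr_mxrow.
rewrite (@eq_mxcol _ _ (fun _ => sc) e (fun i : 'I_e.+1 => (X2^T ^+ i *m X12^T)^T) (fun i => X12 *m X2 ^+ i)).
  exact: eqmx_col.
by move=> i; rewrite trmx_mul trmxK trX.
Qed.

Theorem proposition1 (R : realType) (d du sc e se : nat)
    (A : 'M[R]_d) (B : 'M[R]_(d, du))
    (hd : (sc + e = d)%N)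
    (hrank : \rank (ctrb_mx A B) = sc) (hlt : (sc < d)%N)
    (T : 'M[R]_d) (A1 : 'M[R]_sc) (X12 : 'M[R]_(sc, e)) (X2 : 'M[R]_e)
    (B1 : 'M[R]_(sc, du)) :
  T \in unitmx ->
  T *m A *m invmx T = castmx (hd, hd) (block_mx A1 X12 0 X2) ->
  T *m B = castmx (hd, erefl du) (col_mx B1 0) ->
  \rank (rd_mx X12 X2) = se ->
  exists (r : nat) (h : (sc + (se + r) = d)%N) (S : 'M[R]_d)
         (A12 : 'M[R]_(sc, se)) (A2 : 'M[R]_se) (A32 : 'M[R]_(r, se)) (A3 : 'M[R]_r),
    [/\ S \in unitmx,
        S *m A *m invmx S =
          castmx (h, h) (block_mx A1 (row_mx A12 0) 0 (block_mx A2 0 A32 A3))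
      & S *m B = castmx (h, erefl du) (col_mx B1 0)].
Proof.
move=> uT hTA hTB hrd.
subst d; rewrite castmx_id in hTA hTB.
have hse : (se <= e)%N by rewrite -hrd rank_leq_row.
have [r he] : exists r, (se + r = e)%N by exists (e - se)%N; rewrite subnKC.
subst e.
set K := (\sum_(i < (se + r).+1) <<X12 *m X2 ^+ i>>)%MS.
have hK := @rdE _ _ _ X12 X2.
have hrK : \rank K = se by rewrite -hK mxrank_tr.
set P0 := row_ebase K.
have uP : P0 \in unitmx by apply: row_ebase_unit.
set P1 := usubmx (P0 : 'M_(se + r)).
set P2 := dsubmx (P0 : 'M_(se + r)).
have hP1 : (P1 :=: K)%MS.
  have := eq_row_base K; rewrite /row_base -/P0.
  rewrite hrK pid_mx_row -[P0 in _ *m P0](vsubmxK P0) mul_row_col mul1mx mul0mx addr0.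
  by [].
have hX12 : (X12 <= P1)%MS.
  by rewrite hP1; have := @key _ _ _ X12 X2 0; rewrite expr0 mulmx1.
have [A12 eA12] := submxP hX12.
have hKX : (K *m X2 <= K)%MS.
  rewrite sumsmxMr; apply/sumsmx_subP => i _.
  by rewrite (eqmxMr _ (genmxE _)) -mulmxA mulmxE -exprSr; apply: key.
have hP1X : (P1 *m X2 <= P1)%MS.
  by rewrite hP1; apply: submx_trans hKX; rewrite submxMr // hP1.
have [A2 eA2] := submxP hP1X.
set Y := P2 *m X2 *m invmx P0.
exists r, erefl, (block_mx 1%:M 0 0 P0 *m T), A12, A2, (lsubmx Y), (rsubmx Y).
rewrite !castmx_id.
set D := block_mx 1%:M 0 0 P0.
have uD : D \in unitmx by rewrite unitmxE det_lblock det1 mul1r -unitmxE.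
split.
- by rewrite unitmx_mul uD uT.
- set M := block_mx A1 _ _ _.
  suff hSA : D *m T *m A = M *m (D *m T) by rewrite hSA mulmxK // unitmx_mul uD uT.
  have hTA' : T *m A = block_mx A1 X12 0 X2 *m T by rewrite -hTA mulmxKV.
  rewrite -mulmxA hTA' !mulmxA; congr (_ *m T).
  rewrite /D /M !mulmx_block !mulmx1 !mul1mx !mulmx0 !mul0mx !addr0 !add0r.
  congr block_mx.
  + by rewrite eA12 -[P0 in _ = _ *m P0](vsubmxK P0) mul_row_col mul0mx addr0.
  + rewrite -[in LHS](vsubmxK P0) mul_col_mx -[P0 in RHS](vsubmxK P0) mul_block_col mul0mx addr0 eA2.
    congr col_mx.
    by rewrite -mul_row_col hsubmxK vsubmxK /Y mulmxKV.
- by rewrite -mulmxA hTB castmx_id /D mul_block_col !mul1mx !mul0mx !mulmx0 addr0 add0r.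
Qed.
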